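(* For all integers $m,n,k$ with $n\ge1$, $0\le m\le n$ and $k\ge0$, $$\sum_{j=0}^{n-1}A_{n,n-1,j}\sum_{l\ge0}\mathcal P^+_{m+j}(k,l)=\mathcal P^+_{m+n-1}(k,0)+(xy)^{n-1}\sum_{l\ge0}\mathcal P_m(0,n-k+l).$$
   Context: Three-step paths consist of up-steps $(1,1)$, level steps $(1,0)$ and down-steps $(1,-1)$. Weights: $w((1,1))=1$, $w((1,0))=x+y$, $w((1,-1))=xy$, and the weight $w(P)$ of a path is the product of the weights of its steps. $\mathcal P_n(k,l)=\sum_P w(P)$ over all three-step paths from $(0,k)$ to $(n,l)$ (zero if no such path); $\mathcal P^+_n(k,l)$ is the same sum restricted to paths never running below the $x$-axis. The last row of the matrix $A(n)$ is: $A_{n,n-1,n-1}=\frac{xy-(n-1)(x+y)}{xy}$ and, for $0\le j\le n-2$, $$A_{n,n-1,j}=\frac{(-1)^{n+j}}{xy}\sum_{l=j}^{n}\left(\binom lj\binom{n+j-1-l}{j}x^{l-j}y^{n-1-l}+\binom lj\binom{n+j-l}{j}x^{l-j}y^{n-l}\right),$$ with binomial coefficients $\binom ab$ equal to $0$ if $b<0$ or $a<b$. *)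

(* Defs.v *)
From HB Require Import structures.
From mathcomp Require Import all_boot all_order all_algebra.
Set Implicit Arguments. Unset Strict Implicit. Unset Printing Implicit Defensive.
Import Order.TTheory GRing.Theory Num.Theory.
Local Open Scope ring_scope.

(* A three-step path of length n is a sequence of n steps; a step s : 'I_3
   encodes the step (1, s-1): 0 = down-step, 1 = level step, 2 = up-step. *)
Definition step_h (s : 'I_3) : int := (nat_of_ord s)%:Z - 1.

Definition step_w (R : comRingType) (x y : R) (s : 'I_3) : R :=
  match nat_of_ord s with
  | 0%N => x * y
  | 1%N => x + y
  | _ => 1
  end.

Definition path_w (R : comRingType) (x y : R) (n : nat) (p : n.-tuple 'I_3) : R :=
  \prod_(s <- p) step_w x y s.

Definition end_h (k : int) (p : seq 'I_3) : int := k + \sum_(s <- p) step_h s.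

Definition nonneg_path (n : nat) (k : int) (p : n.-tuple 'I_3) : bool :=
  [forall i : 'I_n.+1, 0 <= end_h k (take i p)].

Definition Pn (R : comRingType) (x y : R) (n : nat) (k l : int) : R :=
  \sum_(p : n.-tuple 'I_3 | end_h k p == l) path_w x y p.

Definition Pplus (R : comRingType) (x y : R) (n : nat) (k l : int) : R :=
  \sum_(p : n.-tuple 'I_3 | (end_h k p == l) && nonneg_path k p) path_w x y p.

(* binomial coefficient with integer top, 0 when the top is negative
   (and, as 'C, 0 when top < bottom) *)
Definition binz (a : int) (b : nat) : nat :=
  match a with Posz a' => 'C(a', b) | Negz _ => 0%N end.

(* Last row of A(n): A_{n,n-1,j} *)
Definition A_last (R : fieldType) (x y : R) (n j : nat) : R :=
  if j == n.-1 then (x * y - (n.-1)%:R * (x + y)) / (x * y)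
  else (-1) ^+ (n + j) / (x * y) *
       \sum_(j <= l < n.+1)
         ((binz l j * binz (n%:Z + j%:Z - 1 - l%:Z) j)%:R
            * x ^+ (l - j) * y ^ (n%:Z - 1 - l%:Z)
          + (binz l j * binz (n%:Z + j%:Z - l%:Z) j)%:R
            * x ^+ (l - j) * y ^ (n%:Z - l%:Z)).

(* Main.v *)
Require Import Defs.
From HB Require Import structures.
From mathcomp Require Import all_boot all_order all_algebra.
From mathcomp Require Import zify ring lra.
Import Order.TTheory GRing.Theory Num.Theory.
Local Open Scope ring_scope.
Set Implicit Arguments. Unset Strict Implicit. Unset Printing Implicit Defensive.
From Stdlib Require Import FunctionalExtensionality.


Lemma sum_tupleS (R : nmodType) N (F : (N.+1).-tuple 'I_3 -> R) :
  \sum_(p : (N.+1).-tuple 'I_3) F p =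
  \sum_(s : 'I_3) \sum_(t : N.-tuple 'I_3) F [tuple of s :: t].
Proof.
rewrite pair_big /=.
rewrite (reindex (fun p : 'I_3 * N.-tuple 'I_3 => [tuple of p.1 :: p.2])) //=.
exists (fun t : (N.+1).-tuple 'I_3 => (thead t, [tuple of behead t])).
  by move=> [s t] _ /=; congr pair; apply: val_inj.
move=> t _; apply: val_inj => /=.
by case: t => [[|a l] //= _].
Qed.

Lemma end_h_cons k s (t : seq 'I_3) : end_h k (s :: t) = end_h (k + step_h s) t.
Proof. by rewrite /end_h big_cons addrA. Qed.

Definition nnseq (k : int) (p : seq 'I_3) :=
  all (fun i => 0 <= end_h k (take i p)) (iota 0 (size p).+1).

Lemma nonnegE n k (p : n.-tuple 'I_3) : nonneg_path k p = nnseq k p.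
Proof.
rewrite /nnseq size_tuple.
apply/forallP/allP => [H i|H i].
  rewrite mem_iota add0n => /andP[_ Hi]. exact: (H (Ordinal Hi)).
by apply: H; rewrite mem_iota add0n ltn_ord.
Qed.

Lemma iotaS n m : iota m.+1 n = map S (iota m n).
Proof. by elim: n m => //= n IH m; rewrite IH. Qed.

Lemma nnseq_cons k s t : nnseq k (s :: t) = (0 <= k) && nnseq (k + step_h s) t.
Proof.
rewrite /nnseq /= iotaS all_map /end_h big_nil addr0; congr andb.
rewrite big_cons addrA; congr andb.
by elim: (iota 1 (size t)) => [//|i l IH] /=; rewrite big_cons addrA IH.
Qed.

Lemma nonneg_cons N k s (t : N.-tuple 'I_3) :
  nonneg_path k [tuple of s :: t] = (0 <= k) && nonneg_path (k + step_h s) t.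
Proof. by rewrite !nonnegE nnseq_cons. Qed.

Section Paths.
Variables (R : comRingType) (x y : R).

Lemma path_w_cons N s (t : N.-tuple 'I_3) :
  path_w x y [tuple of s :: t] = step_w x y s * path_w x y t.
Proof. by rewrite /path_w big_cons. Qed.

Lemma Pplus_step N k l s :
  \sum_(t : N.-tuple 'I_3)
     (if (end_h k [tuple of s :: t] == l) && nonneg_path k [tuple of s :: t]
      then path_w x y [tuple of s :: t] else 0)
  = if 0 <= k then step_w x y s * Pplus x y N (k + step_h s) l else 0.
Proof.
rewrite /Pplus.
case: ifP => hk.
  rewrite mulr_sumr [RHS]big_mkcond; apply: eq_bigr => t _; rewrite nonneg_cons hk /= end_h_cons path_w_cons.
  by case: ifP; rewrite ?mulr0.
by rewrite big1 // => t _; rewrite nonneg_cons hk andbF.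
Qed.

Lemma PplusS N k l : Pplus x y N.+1 k l =
  if 0 <= k then Pplus x y N (k+1) l + (x+y) * Pplus x y N k l
                 + x*y * Pplus x y N (k-1) l else 0.
Proof.
rewrite {1}/Pplus big_mkcond sum_tupleS !big_ord_recl big_ord0 !Pplus_step.
case: ifP => _; last by rewrite !add0r.
rewrite /step_w /step_h /=.
have -> : k + ((bump 0 0)%:Z - 1) = k by rewrite /bump /=; ring.
have -> : k + (0%:Z - 1) = k - 1 by [].
have -> : k + (2%:Z - 1) = k + 1 by [].
rewrite mul1r; ring.
Qed.

Lemma sum_tuple0 (F : 0.-tuple 'I_3 -> R) : \sum_(p : 0.-tuple 'I_3) F p = F [tuple].
Proof.
rewrite (big_pred1 [tuple]) // => t; apply/esym/eqP; apply: val_inj.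
by case: t => [[]].
Qed.

Lemma Pplus0 k l : Pplus x y 0 k l = if (k == l) && (0 <= k) then 1 else 0.
Proof.
rewrite /Pplus big_mkcond sum_tuple0.
rewrite /end_h /nonneg_path big_nil addr0.
have -> : [forall i : 'I_1, 0 <= k + \sum_(s <- take i [tuple]) step_h s] = (0 <= k).
  apply/forallP/idP => [/(_ ord0)|H i]; rewrite /= big_nil addr0 //.
case: ifP => //; by rewrite /path_w big_nil.
Qed.

Lemma Pplus_neg N k l : k < 0 -> Pplus x y N k l = 0.
Proof.
move=> hk; case: N => [|N]; first by rewrite Pplus0; case: (k == l) => //=; rewrite leNgt hk.
by rewrite PplusS leNgt hk.
Qed.

Lemma Pn_step N k l s :
  \sum_(t : N.-tuple 'I_3)
     (if (end_h k [tuple of s :: t] == l) then path_w x y [tuple of s :: t] else 0)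
  = step_w x y s * Pn x y N (k + step_h s) l.
Proof.
rewrite /Pn mulr_sumr [RHS]big_mkcond.
apply: eq_bigr => t _; rewrite /= end_h_cons path_w_cons.
by case: ifP; rewrite ?mulr0.
Qed.

Lemma PnS N k l : Pn x y N.+1 k l =
  Pn x y N (k+1) l + (x+y) * Pn x y N k l + x*y * Pn x y N (k-1) l.
Proof.
rewrite {1}/Pn big_mkcond sum_tupleS !big_ord_recl big_ord0 !Pn_step.
rewrite /step_w /step_h /=.
have -> : k + ((bump 0 0)%:Z - 1) = k by rewrite /bump /=; ring.
have -> : k + (0%:Z - 1) = k - 1 by [].
have -> : k + (2%:Z - 1) = k + 1 by [].
rewrite mul1r; ring.
Qed.

Lemma Pn0 k l : Pn x y 0 k l = if k == l then 1 else 0.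
Proof.
rewrite /Pn big_mkcond sum_tuple0.
rewrite /end_h big_nil addr0.
case: ifP => //; by rewrite /path_w big_nil.
Qed.

Lemma Pn_shift N k l : Pn x y N k l = Pn x y N 0 (l - k).
Proof.
rewrite /Pn; apply: eq_bigl => p; rewrite /end_h add0r.
apply/eqP/eqP => [<-|->]; ring.
Qed.

End Paths.


Section Ops.
Variables (R : comRingType) (x y : R).

Definition Tp (f : int -> R) : int -> R := fun k =>
  if 0 <= k then f (k+1) + (x+y) * f k + (if 1 <= k then x*y * f (k-1) else 0)
  else 0.
Definition Vp (f : int -> R) : int -> R := fun k =>
  f (k+1) + (x+y) * f k + x*y * f (k-1).
Definition one : int -> R := fun k => if 0 <= k then 1 else 0.
Definition del0 : int -> R := fun k => if k == 0 then 1 else 0.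
Definition indn (n : nat) : int -> R := fun k => if n%:Z <= k then 1 else 0.

Lemma Tp_lin f g a : Tp (fun k => f k + a * g k) = fun k => Tp f k + a * Tp g k.
Proof.
apply: functional_extensionality => k; rewrite /Tp.
case: ifP => _; last by rewrite mulr0 addr0.
case: ifP => _; ring.
Qed.

Lemma Tp_scale f a : Tp (fun k => a * f k) = fun k => a * Tp f k.
Proof.
apply: functional_extensionality => k; rewrite /Tp.
case: ifP => _; last by rewrite mulr0.
case: ifP => _; ring.
Qed.

Lemma Tp_zero : Tp (fun _ => 0) = fun _ => 0.
Proof.
apply: functional_extensionality => k; rewrite /Tp.
case: ifP => _ //; case: ifP => _; ring.
Qed.

Lemma iter_lin m f g a :
  iter m Tp (fun k => f k + a * g k) = fun k => iter m Tp f k + a * iter m Tp g k.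
Proof.
elim: m => [//|m IH]; rewrite !iterS IH Tp_lin //.
Qed.

Lemma iter_scale m f a :
  iter m Tp (fun k => a * f k) = fun k => a * iter m Tp f k.
Proof. by elim: m => [//|m IH]; rewrite !iterS IH Tp_scale. Qed.

Lemma iter_zero m : iter m Tp (fun _ => 0) = fun _ => 0.
Proof. by elim: m => [//|m IH]; rewrite !iterS IH Tp_zero. Qed.

Lemma iter_sum m n (c : nat -> R) (F : nat -> int -> R) :
  iter m Tp (fun k => \sum_(j < n) c j * F j k) =
  fun k => \sum_(j < n) c j * iter m Tp (F j) k.
Proof.
elim: n => [|n IH].
  have -> : (fun k : int => \sum_(j < 0) c j * F j k) = fun _ => 0.
    by apply: functional_extensionality => k; rewrite big_ord0.
  by rewrite iter_zero; apply: functional_extensionality => k; rewrite big_ord0.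
have -> : (fun k => \sum_(j < n.+1) c j * F j k) =
          fun k => (\sum_(j < n) c j * F j k) + c n * F n k.
  by apply: functional_extensionality => k; rewrite big_ord_recr.
rewrite iter_lin IH; apply: functional_extensionality => k.
by rewrite big_ord_recr.
Qed.

Lemma Tp_sum n (c : nat -> R) (F : nat -> int -> R) :
  Tp (fun k => \sum_(j < n) c j * F j k) = fun k => \sum_(j < n) c j * Tp (F j) k.
Proof. exact: (iter_sum 1). Qed.

Lemma Pplus_iter N k l : Pplus x y N k l = iter N Tp (fun k => Pplus x y 0 k l) k.
Proof.
elim: N k => [//|N IH] k.
rewrite PplusS iterS /Tp -!IH.
case: ifP => // hk; case: ifP => h1 //.
move/negbT: h1 => h1.
by rewrite (@Pplus_neg _ x y N (k-1)) ?mulr0 ?addr0 //; lia.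
Qed.

Lemma Pplus_iter0 N k : Pplus x y N k 0 = iter N Tp del0 k.
Proof.
rewrite Pplus_iter; congr (iter _ _ _ _); apply: functional_extensionality => k'.
by rewrite Pplus0 /del0; case: eqP => [->|].
Qed.

Lemma sigma_eq N k (L : nat) : k + N%:Z <= L%:Z ->
  \sum_(0 <= l < L.+1) Pplus x y N k l%:Z = iter N Tp one k.
Proof.
elim: N k => [|N IH] k hL.
  rewrite /= /one big_mkord.
  under eq_bigr => l _ do rewrite Pplus0.
  case: (lerP 0 k) => hk; last first.
    by rewrite big1 // => l _; rewrite andbF.
  have hk' : (absz k < L.+1)%N by lia.
  rewrite (bigD1 (Ordinal hk')) //= gez0_abs // eqxx big1 ?addr0 // => l hl.
  rewrite andbT; case: eqP => //= E; move: hl; rewrite -val_eqE /= E /=.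
  by rewrite eqxx.
rewrite iterS /Tp.
under eq_bigr => l _ do rewrite PplusS.
case: ifP => hk; last by rewrite big1.
rewrite !big_split /= -!mulr_sumr (IH (k+1)) ?(IH k); try lia.
case: ifP => h1; first by rewrite IH //; lia.
move/negbT: h1 => h1.
by rewrite big1 ?mulr0 ?addr0 // => l _; rewrite (@Pplus_neg _ x y) //; lia.
Qed.

Lemma nu_eq n N k (L : nat) : N%:Z + k - n%:Z <= L%:Z ->
  \sum_(0 <= l < L.+1) Pn x y N 0 (n%:Z - k + l%:Z) = iter N Vp (indn n) k.
Proof.
elim: N k => [|N IH] k hL.
  rewrite /= /indn big_mkord.
  under eq_bigr => l _ do rewrite Pn0.
  case: (lerP n%:Z k) => hk; last first.
    by rewrite big1 // => l _; case: eqP => //; lia.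
  have hk' : (absz (k - n%:Z) < L.+1)%N by lia.
  rewrite (bigD1 (Ordinal hk')) //= ifT; last by apply/eqP; lia.
  rewrite big1 ?addr0 // => l hl.
  case: eqP => // E; move: hl; rewrite -val_eqE /=.
  have -> : nat_of_ord l = absz (k - n%:Z) by lia.
  by rewrite eqxx.
have E1 : forall l : int, n%:Z - k + l - (0 + 1) = n%:Z - (k + 1) + l by move=> l; ring.
have E2 : forall l : int, n%:Z - k + l - (0 - 1) = n%:Z - (k - 1) + l by move=> l; ring.
under eq_bigr => l _ do rewrite PnS (Pn_shift _ _ N (0+1)) (Pn_shift _ _ N (0-1)) E1 E2.
rewrite !big_split /= -!mulr_sumr !IH ?iterS //; lia.
Qed.

Lemma TV n i : (i <= n)%N ->
  [/\ (forall k : int, 0 <= k -> iter i Tp (indn n) k = iter i Vp (indn n) k) &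
  (forall k : int, k < n%:Z - i%:Z -> iter i Vp (indn n) k = 0)].
Proof.
elim: i => [|i IH] hi.
  split => // k hk; rewrite /= /indn ifF //; lia.
have hi' : (i <= n)%N by lia.
have [IH1 IH2] := IH hi'.
split => k hk.
  rewrite !iterS [Tp _ _]/Tp [Vp _ _]/Vp ifT // (IH1 (k+1)) ?(IH1 k) //; try lia.
  case: ifP => h1; first by rewrite IH1 //; lia.
  by move/negbT: h1 => h1; rewrite (IH2 (k-1)) ?mulr0 //; lia.
by rewrite iterS [Vp _ _]/Vp !IH2 ?mulr0 ?addr0 //; lia.
Qed.

End Ops.


Section QmSec.
Variable (R : comRingType).

Definition Qm (x y : R) j1 j2 M :=
  \sum_(a < M.+1) ('C(a + j1, j1) * 'C(M - a + j2, j2))%:R * x ^+ a * y ^+ (M - a).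

Lemma Qm0 x y j1 j2 : Qm x y j1 j2 0 = 1.
Proof. by rewrite /Qm big_ord_recl big_ord0 /= !binn addr0 !mulr1. Qed.

Lemma QmL1 x y j1 j2 M :
  Qm x y j1.+1 j2 M.+1 = Qm x y j1 j2 M.+1 + x * Qm x y j1.+1 j2 M.
Proof.
rewrite /Qm big_ord_recl [in RHS]big_ord_recl /= !binn -addrA; congr (_ + _).
rewrite mulr_sumr -big_split; apply: eq_bigr => a _ /=.
rewrite /bump /= !add1n subSS.
have -> : 'C(a.+1 + j1.+1, j1.+1) = ('C(a + j1.+1, j1.+1) + 'C(a.+1 + j1, j1))%N.
  by rewrite addSn binS addnS addSn.
by rewrite mulnDl natrD !natrM exprS; ring.
Qed.

Lemma Qm_sym x y j1 j2 M : Qm x y j1 j2 M = Qm y x j2 j1 M.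
Proof.
rewrite /Qm (reindex_inj rev_ord_inj); apply: eq_bigr => a _ /=.
rewrite subSS subKn; last by rewrite -ltnS.
rewrite mulnC; ring.
Qed.

Lemma QmL2 x y j1 j2 M :
  Qm x y j1 j2.+1 M.+1 = Qm x y j1 j2 M.+1 + y * Qm x y j1 j2.+1 M.
Proof. by rewrite !(Qm_sym x y) QmL1. Qed.

Lemma QmL0 x y j2 M :
  Qm x y 0 j2 M.+1 = ('C(M.+1 + j2, j2))%:R * y ^+ M.+1 + x * Qm x y 0 j2 M.
Proof.
rewrite /Qm big_ord_recl /= bin0 mul1n mulr1; congr (_ + _).
rewrite mulr_sumr; apply: eq_bigr => a _ /=.
rewrite /bump /= !add1n subSS !bin0 !mul1n exprS; ring.
Qed.

Lemma Qm1 x y j : Qm x y j j 1 = (j.+1)%:R * (x + y).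
Proof.
rewrite /Qm !big_ord_recl big_ord0 /= /bump /= !add0n !add1n binn binSn.
rewrite addr0 !muln1 mul1n; ring.
Qed.

Definition Qd x y j N := if (j <= N)%N then Qm x y j j (N - j) else 0.

Lemma Qd_gt x y j N : (N < j)%N -> Qd x y j N = 0.
Proof. by move=> h; rewrite /Qd leqNgt h. Qed.

Lemma Qrec x y j N : Qd x y j N.+2 =
  (if j is j'.+1 then Qd x y j' N.+1 else 0) + (x+y) * Qd x y j N.+1 - x*y * Qd x y j N.
Proof.
case: j => [|j].
  rewrite /Qd /= !subn0 add0r (QmL0 x y 0 N.+1) (QmL0 x y 0 N) !bin0 exprS; ring.
have [hle|hgt] := leqP j.+1 N.
  rewrite /Qd !ifT; try lia.
  have -> : (N.+2 - j.+1 = (N - j.+1).+2)%N by lia.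
  have -> : (N.+1 - j.+1 = (N - j.+1).+1)%N by lia.
  have -> : (N.+1 - j = (N - j.+1).+2)%N by lia.
  set M := (N - j.+1)%N.
  rewrite (QmL1 x y j j.+1 M.+1) (QmL2 x y j j M.+1) (QmL1 x y j j.+1 M); ring.
case: (ltngtP j.+1 N.+1) => h.
- lia.
- have [->|h2] := eqVneq j N.+1.
    rewrite (@Qd_gt x y N.+2 N.+1) // (@Qd_gt x y N.+2 N) //.
    by rewrite !mulr0 !subr0 addr0 /Qd !leqnn !subnn !Qm0.
  rewrite (@Qd_gt x y j.+1 N.+2) ?(@Qd_gt x y j N.+1) ?(@Qd_gt x y j.+1 N.+1)
     ?(@Qd_gt x y j.+1 N); try lia.
  by rewrite !mulr0 !subr0 addr0.
- have -> : j = N by lia.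
  rewrite (@Qd_gt x y N.+1 N) // mulr0 subr0 /Qd !ifT; try lia.
  have -> : (N.+2 - N.+1 = 1)%N by lia.
  have -> : (N.+1 - N = 1)%N by lia.
  have -> : (N.+1 - N.+1 = 0)%N by lia.
  rewrite (QmL1 x y N N.+1 0) (QmL2 x y N N 0) !Qm0; ring.
Qed.

End QmSec.

Section Core.
Variables (R : comRingType) (x y : R).

Definition qg (j : nat) : R := \sum_(b < j.+1) (x*y)^+b.
Definition gam N : int -> R := fun k => if 0 <= k then qg (minn N (absz k)) else 0.

Lemma qg0 : qg 0 = 1.
Proof. by rewrite /qg big_ord_recl big_ord0 addr0 expr0. Qed.

Lemma qgS j : qg j.+1 = qg j + (x*y)^+j.+1.
Proof. by rewrite /qg big_ord_recr. Qed.

Lemma wq j : x * y * qg j = qg j.+1 - 1.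
Proof.
elim: j => [|j IH]; first by rewrite qgS qg0 expr1 mulr1; ring.
by rewrite (qgS j.+1) {1}(qgS j) mulrDr IH !exprS; ring.
Qed.

Lemma gamma_rec N k :
  gam N.+2 k = Tp x y (gam N.+1) k - (x+y) * gam N.+1 k - x*y * gam N k.
Proof.
rewrite /Tp /gam.
case: k => [k|k]; last by rewrite /= !mulr0 !subr0.
have -> : (0 <= k%:Z) = true by lia.
have -> : (0 <= k%:Z + 1) = true by lia.
have -> : absz (k%:Z + 1) = k.+1 by lia.
case: k => [|k].
  have -> : (1 <= 0%:Z) = false by [].
  have -> : minn N.+2 0 = 0%N by lia.
  have -> : minn N.+1 1 = 1%N by lia.
  have -> : minn N 0 = 0%N by lia.
  have -> : minn N.+1 0 = 0%N by lia.
  by rewrite (wq 0) qgS qg0 expr1 mulr1; ring.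
have -> : (1 <= k.+1%:Z) = true by lia.
have -> : (0 <= k.+1%:Z - 1) = true by lia.
have -> : absz (k.+1%:Z - 1) = k by lia.
have -> : absz (k.+1%:Z) = k.+1 by [].
case: (ltngtP k N) => h.
- have -> : minn N.+2 k.+1 = k.+1 by lia.
  have -> : minn N.+1 k.+2 = k.+2 by lia.
  have -> : minn N.+1 k.+1 = k.+1 by lia.
  have -> : minn N.+1 k = k by lia.
  have -> : minn N k.+1 = k.+1 by lia.
  rewrite (wq k) (wq k.+1); ring.
- have -> : minn N.+2 k.+1 = N.+2 by lia.
  have -> : minn N.+1 k.+2 = N.+1 by lia.
  have -> : minn N.+1 k.+1 = N.+1 by lia.
  have -> : minn N.+1 k = N.+1 by lia.
  have -> : minn N k.+1 = N by lia.
  rewrite (wq N) (wq N.+1); ring.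
- subst k.
  have -> : minn N.+2 N.+1 = N.+1 by lia.
  have -> : minn N.+1 N.+2 = N.+1 by lia.
  have -> : minn N.+1 N.+1 = N.+1 by lia.
  have -> : minn N.+1 N = N by lia.
  have -> : minn N N.+1 = N by lia.
  ring.
Qed.

Definition phi j := iter j (Tp x y) (@one R).

Lemma Tp_sum_pt n (c : nat -> R) (F : nat -> int -> R) k0 :
  \sum_(j < n) c j * Tp x y (F j) k0 = Tp x y (fun k => \sum_(j < n) c j * F j k) k0.
Proof. by rewrite Tp_sum. Qed.

Definition Kst N := forall k : int,
  \sum_(j < N.+1) (-1)^+j * Qd x y j N * phi j k = (-1)^+N * gam N k.

Lemma K01 : Kst 0 /\ Kst 1.
Proof.
split => k.
  rewrite big_ord_recl big_ord0 addr0 /= /Qd /= Qm0 /phi /= /one /gam.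
  by case: ifP => _; rewrite ?min0n ?qg0; ring.
rewrite !big_ord_recl big_ord0 addr0 /= /Qd /= subn0 Qm1 subnn Qm0 /phi /= /one /gam /Tp.
case: k => [k|k]; last by rewrite /=; ring.
rewrite /=; case: k => [|k].
  by rewrite /= qg0; ring.
have -> : minn 1 k.+1 = 1%N by lia.
by rewrite /= qgS qg0 expr1; ring.
Qed.

Lemma Kstep N : Kst N -> Kst N.+1 -> Kst N.+2.
Proof.
move=> IH0 IH1 k.
have e : forall (j : nat) (A B C P : R), (-1)^+j * (A + (x+y)*B - x*y*C) * P =
   (-1)^+j*A*P + (x+y) * ((-1)^+j*B*P) - x*y*((-1)^+j*C*P) by move=> *; ring.
under eq_bigr => j _ do rewrite Qrec e.
rewrite sumrB big_split /= -!mulr_sumr.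
have hA : \sum_(j < N.+3) (-1)^+j * (if nat_of_ord j is j'.+1 then Qd x y j' N.+1 else 0) * phi j k
        = - Tp x y (fun k => \sum_(j < N.+2) ((-1)^+j * Qd x y j N.+1) * phi j k) k.
  rewrite big_ord_recl /= mulr0 mul0r add0r -(Tp_sum_pt N.+2 (fun j : nat => (-1)^+j * Qd x y j N.+1) phi) -sumrN.
  apply: eq_bigr => j _; rewrite /bump /= add0n add1n exprS; ring.
have hB : \sum_(j < N.+3) (-1)^+j * Qd x y j N.+1 * phi j k = (-1)^+N.+1 * gam N.+1 k.
  by rewrite big_ord_recr /= (@Qd_gt _ x y N.+2 N.+1) // mulr0 mul0r addr0 IH1.
have hC : \sum_(j < N.+3) (-1)^+j * Qd x y j N * phi j k = (-1)^+N * gam N k.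
  rewrite big_ord_recr big_ord_recr /= (@Qd_gt _ x y N.+2 N) // (@Qd_gt _ x y N.+1 N) //.
  by rewrite !mulr0 !mul0r !addr0 IH0.
rewrite hA hB hC.
have -> : (fun k => \sum_(j < N.+2) (-1) ^+ j * Qd x y j N.+1 * phi j k) =
          (fun k => (-1)^+N.+1 * gam N.+1 k).
  by apply: functional_extensionality => k'; rewrite IH1.
rewrite Tp_scale gamma_rec !exprS; ring.
Qed.

Lemma Kall N : Kst N.
Proof.
suff : Kst N /\ Kst N.+1 by case.
elim: N => [|N [IH0 IH1]]; first exact: K01.
by split => //; apply: Kstep.
Qed.

End Core.


Section Core2.
Variables (R : fieldType) (x y : R).

Lemma Asum2 n j : (j <= n)%N ->
  \sum_(j <= l < n.+1) (binz l j * binz (n%:Z + j%:Z - l%:Z) j)%:R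
            * x ^+ (l - j) * y ^ (n%:Z - l%:Z) = Qd x y j n.
Proof.
move=> hj.
rewrite /Qd hj -{1}(add0n j) big_addn big_mkord.
have -> : (n.+1 - j = (n - j).+1)%N by lia.
apply: eq_bigr => i _.
have hi : (i <= n - j)%N by rewrite -ltnS.
have -> : n%:Z + j%:Z - (i + j)%N%:Z = (n - i)%N%:Z by lia.
have -> : n%:Z - (i + j)%N%:Z = (n - j - i)%N%:Z by lia.
have -> : (i + j - j = i)%N by lia.
have -> : (n - j - i + j = n - i)%N by lia.
by rewrite /= -exprnP addnC.
Qed.

Lemma Asum1 n j : (j <= n)%N ->
  \sum_(j <= l < n.+2) (binz l j * binz (n.+1%:Z + j%:Z - 1 - l%:Z) j)%:R
            * x ^+ (l - j) * y ^ (n.+1%:Z - 1 - l%:Z) = Qd x y j n.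
Proof.
move=> hj.
rewrite big_nat_recr /=; last by lia.
have -> : binz (n.+1%:Z + j%:Z - 1 - n.+1%:Z) j = 0%N.
  case: j hj => [|j'] hj.
    have -> : n.+1%:Z + 0%:Z - 1 - n.+1%:Z = -1 by lia.
    by [].
  have -> : n.+1%:Z + j'.+1%:Z - 1 - n.+1%:Z = j'%:Z by lia.
  by rewrite /= bin_small.
rewrite muln0 mul0r mul0r addr0 -(Asum2 hj).
apply: eq_bigr => l _.
have -> : n.+1%:Z + j%:Z - 1 - l%:Z = n%:Z + j%:Z - l%:Z by lia.
have -> : n.+1%:Z - 1 - l%:Z = n%:Z - l%:Z by lia.
by [].
Qed.

Lemma A_lt n j : (j < n)%N ->
  A_last x y n.+1 j = (-1)^+(n.+1 + j) / (x*y) * (Qd x y j n + Qd x y j n.+1).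
Proof.
move=> hj; rewrite /A_last /= ifF; last by apply/negbTE; rewrite neq_ltn hj.
rewrite big_split /= Asum1 ?Asum2 //; lia.
Qed.

Lemma A_top n : A_last x y n.+1 n = (x*y - n%:R * (x+y)) / (x*y).
Proof. by rewrite /A_last /= eqxx. Qed.

Lemma gam_diff n k :
  gam x y n.+1 k = gam x y n k + (x*y)^+n.+1 * @indn R n.+1 k.
Proof.
rewrite /gam /indn; case: k => [k|k]; last by rewrite /= mulr0 addr0.
rewrite /=; case: (leqP n.+1 k) => h.
  have -> : minn n k = n by lia.
  have -> : (n.+1%:Z <= k%:Z) = true by lia.
  by rewrite qgS mulr1.
have -> : minn n k = k by lia.
have -> : (n.+1%:Z <= k%:Z) = false by lia.
by rewrite mulr0 addr0.
Qed.

Lemma Tp_one : Tp x y (@one R) =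
  fun k => (1 + (x+y) + x*y) * @one R k + (-(x*y)) * @del0 R k.
Proof.
apply: functional_extensionality => k; rewrite /Tp /one /del0.
case: k => [k|k]; last by rewrite /= !mulr0 addr0.
case: k => [|k] /=; first by ring.
by rewrite mulr0; ring.
Qed.

Lemma phi_diff n k : phi x y n.+1 k =
  (1 + (x+y) + x*y) * phi x y n k - x*y * iter n (Tp x y) (@del0 R) k.
Proof.
rewrite /phi iterSr Tp_one iter_lin iter_scale; ring.
Qed.

Lemma core n k (hw : x * y != 0) :
  \sum_(j < n.+1) A_last x y n.+1 j * phi x y j k =
  iter n (Tp x y) (@del0 R) k + (x*y)^+n * @indn R n.+1 k.
Proof.
rewrite big_ord_recr /= A_top.
set S1 := \sum_(j < n) (-1)^+j * Qd x y j n * phi x y j k.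
set S2 := \sum_(j < n) (-1)^+j * Qd x y j n.+1 * phi x y j k.
have -> : \sum_(j < n) A_last x y n.+1 j * phi x y j k = (-1)^+n.+1 / (x*y) * (S1 + S2).
  rewrite /S1 /S2 -big_split /= mulr_sumr; apply: eq_bigr => j _.
  by rewrite A_lt // exprD; ring.
have E1 : S1 = (-1)^+n * gam x y n k - (-1)^+n * phi x y n k.
  have := Kall x y n k; rewrite big_ord_recr /= /Qd leqnn subnn Qm0 -/S1 => <-; ring.
have E2 : S2 = (-1)^+n.+1 * gam x y n.+1 k - (-1)^+n * (n.+1%:R * (x+y)) * phi x y n k
               - (-1)^+n.+1 * phi x y n.+1 k.
  have := Kall x y n.+1 k; rewrite !big_ord_recr /= -/S2 /Qd leqnn leqnSn subnn.
  have -> : (n.+1 - n = 1)%N by lia.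
  rewrite Qm0 Qm1 => <-; ring.
rewrite E1 E2 gam_diff phi_diff !exprS -signr_odd.
case: (odd n); rewrite /=; field.
all: by move: hw; rewrite mulf_eq0 negb_or andbC.
Qed.

End Core2.

Unset Implicit Arguments.

Theorem lemma9 (R : fieldType) (x y : R) (hxy : x * y != 0) (m n k : nat) :
  (1 <= n)%N -> (m <= n)%N ->
  \sum_(j < n) A_last x y n j *
     (\sum_(0 <= l < (k + m + n).+1) Pplus x y (m + j) k%:Z l%:Z)
  = Pplus x y (m + n - 1) k%:Z 0
    + (x * y) ^+ (n - 1) *
      (\sum_(0 <= l < (k + m + n).+1) Pn x y m 0 (n%:Z - k%:Z + l%:Z)).
Proof.
case: n => [//|n] _ hm.
rewrite (eq_bigr (fun j : 'I_n.+1 => A_last x y n.+1 j * iter m (Tp x y) (phi x y j) k%:Z)); last first.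
  move=> j _; rewrite sigma_eq; last by have := ltn_ord j; lia.
  by rewrite iterD.
have := congr1 (fun f => f k%:Z) (iter_sum x y m n.+1 (fun j => A_last x y n.+1 j) (phi x y)).
move=> /= <-.
have -> : (fun k => \sum_(j < n.+1) A_last x y n.+1 j * phi x y j k) =
          (fun k => iter n (Tp x y) (@del0 R) k + (x*y)^+n * @indn R n.+1 k).
  by apply: functional_extensionality => k'; rewrite core.
rewrite iter_lin -iterD Pplus_iter0.
have -> : (m + n.+1 - 1 = m + n)%N by lia.
have -> : (n.+1 - 1 = n)%N by lia.
congr (_ + _ * _).
have [T1 _] := TV x y hm.
rewrite T1 //; symmetry; apply: nu_eq; lia.
Qed.
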